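(* There is an absolute constant $C>0$ such that the following holds for every $n\ge 2$, every connected $n$-node graph $G_0$ and every node $u$. Let $T=\lceil Cn\ln n\rceil$ and run the triangulation process from $G_0$. Then the probability of the event that (for every $t<T$, more than $\delta_0/4$ nodes of $N^1_t(u)$ are strongly tied to $N^2_t(u)$ at round $t$) and $d_T(u)<\tfrac54\delta_0$ is at most $1/n^2$.
   Context: Triangulation process: $G_0$ is a connected simple undirected graph on an $n$-node vertex set $V$. Given $G_t$, in round $t$ every node $x$ independently picks two neighbors $v,w$ of $x$ in $G_t$, independently and uniformly at random, and the edge $\{v,w\}$ is added (nothing happens if $v=w$ or the edge already exists); $G_{t+1}$ is $G_t$ together with all edges added in round $t$. Edges are never removed. Notation: $d_t(x)$ is the degree of $x$ in $G_t$; $\delta_t$ is the minimum degree of $G_t$; $N^i_t(x)$ is the set of nodes at distance exactly $i$ from $x$ in $G_t$; for a set $S$, $d_t(x,S)$ is the number of neighbors of $x$ in $G_t$ lying in $S$. A node $x$ is strongly tied to a set $S$ at round $t$ if $d_t(x,S)\ge \delta_0/2$, and weakly tied to $S$ at round $t$ if $d_t(x,S)<\delta_0/2$. *)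

(* Defs.v *)
From HB Require Import structures.
From Stdlib Require Import Reals.
From mathcomp Require Import all_boot.
Set Implicit Arguments. Unset Strict Implicit. Unset Printing Implicit Defensive.

Definition graph (n : nat) := {ffun 'I_n -> {set 'I_n}}.

Definition adj n (G : graph n) : rel 'I_n := fun x y => y \in G x.

Definition simple_graph n (G : graph n) : Prop :=
  (forall x y : 'I_n, (y \in G x) = (x \in G y)) /\ (forall x : 'I_n, x \notin G x).

Definition connected_graph n (G : graph n) : Prop :=
  forall x y : 'I_n, connect (adj G) x y.

Definition deg n (G : graph n) (x : 'I_n) : nat := #|G x|.
Definition deg_in n (G : graph n) (x : 'I_n) (S : {set 'I_n}) : nat := #|G x :&: S|.
(* minimum degree (every degree is < n, so n is a neutral start value) *)
Definition mindeg n (G : graph n) : nat := \big[minn/n]_(x : 'I_n) deg G x.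

Fixpoint ball n (G : graph n) (u : 'I_n) (i : nat) : {set 'I_n} :=
  match i with
  | 0 => [set u]
  | i'.+1 => ball G u i' :|: \bigcup_(y in ball G u i') G y
  end.
Definition sphere n (G : graph n) (u : 'I_n) (i : nat) : {set 'I_n} :=
  match i with
  | 0 => [set u]
  | i'.+1 => ball G u i :\: ball G u i'
  end.

(* The choices made by all nodes in one round: node x picks the pair (v,w). *)
Definition picks (n : nat) := {ffun 'I_n -> 'I_n * 'I_n}.

(* probability that node x picks the pair p in graph G: v,w independent uniform
   neighbours of x.  (Isolated nodes, which never occur for connected graphs
   with n >= 2, deterministically pick (x,x), i.e. do nothing.) *)
Definition pick_weight n (G : graph n) (x : 'I_n) (p : 'I_n * 'I_n) : R :=
  if G x == set0 then (if (p.1 == x) && (p.2 == x) then R1 else R0)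
  else if (p.1 \in G x) && (p.2 \in G x) then pow (Rinv (INR (deg G x))) 2 else R0.

Definition round_weight n (G : graph n) (c : picks n) : R :=
  foldr Rmult R1 [seq pick_weight G x (c x) | x <- enum 'I_n].

(* G_{t+1} = G_t plus all edges {v,w}, v <> w, picked in round t *)
Definition step n (G : graph n) (c : picks n) : graph n :=
  [ffun y => G y :|: [set z | [exists x, ((c x).1 != (c x).2) &&
        ((((c x).1 == y) && ((c x).2 == z)) || (((c x).2 == y) && ((c x).1 == z)))]]].

Fixpoint traj n (G : graph n) (cs : seq (picks n)) : seq (graph n) :=
  match cs with
  | [::] => [:: G]
  | c :: cs' => G :: traj (step G c) cs'
  end.

Fixpoint traj_weight n (G : graph n) (cs : seq (picks n)) : R :=
  match cs with
  | [::] => R1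
  | c :: cs' => Rmult (round_weight G c) (traj_weight (step G c) cs')
  end.

Definition seq_of_rounds n T (cs : {ffun 'I_T -> picks n}) : seq (picks n) :=
  [seq cs i | i <- enum 'I_T].

Definition Prob n (G0 : graph n) (T : nat) (E : seq (graph n) -> bool) : R :=
  foldr Rplus R0
    [seq (if E (traj G0 (seq_of_rounds cs)) then traj_weight G0 (seq_of_rounds cs) else R0)
    | cs <- enum {ffun 'I_T -> picks n}].

(* The event of the lemma, with d0 = delta_0:
   (for all t < T, #{x in N^1_t(u) | d_t(x, N^2_t(u)) >= d0/2} > d0/4)
   and d_T(u) < 5/4 d0   (written multiplied out over nat). *)
Definition event5 n (G0 : graph n) (u : 'I_n) (T : nat) (gs : seq (graph n)) : bool :=
  let d0 := mindeg G0 in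
  [forall t : 'I_T,
     let Gt := nth G0 gs t in
     d0 < 4 * #|[set x in sphere Gt u 1 | d0 <= 2 * deg_in Gt x (sphere Gt u 2)]| ]
  && (4 * deg (nth G0 gs T) u < 5 * d0).

(* ceiling of a real number: ceil x = - floor (-x), floor y = up y - 1 *)
Definition Rceil (x : R) : Z := Z.sub 1 (up (Ropp x)).

Definition Tlen (C : R) (n : nat) : nat := Z.to_nat (Rceil (Rmult (Rmult C (INR n)) (ln (INR n)))).

(* Main.v *)
Require Import Defs.
From HB Require Import structures.
From Stdlib Require Import Reals Lra Lia ZArith.
From mathcomp Require Import all_boot zify.
Set Implicit Arguments. Unset Strict Implicit. Unset Printing Implicit Defensive.
Set Warnings "-notation-overridden".
Open Scope R_scope.

Lemma RplusA : associative Rplus. Proof. by move=> *; rewrite Rplus_assoc. Qed.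
Lemma RmultA : associative Rmult. Proof. by move=> *; rewrite Rmult_assoc. Qed.
HB.instance Definition _ := Monoid.isComLaw.Build R R0 Rplus RplusA Rplus_comm Rplus_0_l.
HB.instance Definition _ := Monoid.isComLaw.Build R R1 Rmult RmultA Rmult_comm Rmult_1_l.
HB.instance Definition _ := Monoid.isMulLaw.Build R R0 Rmult Rmult_0_l Rmult_0_r.
HB.instance Definition _ := Monoid.isAddLaw.Build R Rmult Rplus Rmult_plus_distr_r Rmult_plus_distr_l.

Section S.
Variable n : nat.
Implicit Types (G : graph n).

Lemma Prob_big G T E : Prob G T E = \big[Rplus/R0]_(cs : {ffun 'I_T -> picks n})
  (if E (traj G (seq_of_rounds cs)) then traj_weight G (seq_of_rounds cs) else R0).
Proof. by rewrite /Prob foldrE big_map big_enum. Qed.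

Lemma Prob_0 G E : Prob G 0 E = if E [:: G] then R1 else R0.
Proof.
rewrite Prob_big.
rewrite (eq_bigr (fun _ => if E [:: G] then R1 else R0)); last first.
  by move=> cs _; rewrite /seq_of_rounds enum_ord0.
rewrite big_const card_ffun card_ord expn0 /=. by case: (E _); rewrite Rplus_0_r.
Qed.

Definition ffcons T (c : picks n) (f : {ffun 'I_T -> picks n}) : {ffun 'I_T.+1 -> picks n} :=
  [ffun i => if unlift ord0 i is Some j then f j else c].

Lemma seq_ffcons T c f : seq_of_rounds (@ffcons T c f) = c :: seq_of_rounds f.
Proof.
rewrite /seq_of_rounds enum_ordSl /= ffunE unlift_none -map_comp; congr (_ :: _).
by apply: eq_map => j /=; rewrite ffunE liftK.
Qed.

Lemma Prob_S G T E : Prob G T.+1 E =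
  \big[Rplus/R0]_(c : picks n) (round_weight G c * Prob (step G c) T (fun gs => E (G :: gs))).
Proof.
rewrite Prob_big.
rewrite (reindex (fun p : picks n * {ffun 'I_T -> picks n} => ffcons p.1 p.2)) /=; last first.
  exists (fun cs : {ffun 'I_T.+1 -> picks n} => (cs ord0, [ffun j => cs (lift ord0 j)])).
    move=> [c f] _ /=; rewrite /ffcons ffunE unlift_none; congr (_, _).
    by apply/ffunP => j; rewrite !ffunE liftK.
  move=> cs _; apply/ffunP => i; rewrite /ffcons /= ffunE.
  by case: unliftP => [j ->|->] //; rewrite ffunE.
rewrite -(pair_big xpredT xpredT (fun c f => (if E (traj G (seq_of_rounds (@ffcons T c f)))
       then traj_weight G (seq_of_rounds (ffcons c f)) else R0))) /=.
apply: eq_bigr => c _; rewrite Prob_big big_distrr /=.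
apply: eq_bigr => f _; rewrite seq_ffcons /=.
by case: (E _); rewrite ?Rmult_0_r.
Qed.

Lemma iter_Rplus k c : iter k (Rplus c) R0 = INR k * c.
Proof. elim: k => [|k IH]; first (simpl; lra). rewrite S_INR /= IH; lra. Qed.

Lemma sum_ind (T : finType) (A : {pred T}) c :
  \big[Rplus/R0]_(i : T) (if i \in A then c else R0) = INR #|A| * c.
Proof. by rewrite -big_mkcond big_const iter_Rplus. Qed.

Lemma sum_pair (F : 'I_n * 'I_n -> R) :
  \big[Rplus/R0]_(p : 'I_n * 'I_n) F p = \big[Rplus/R0]_(i : 'I_n) \big[Rplus/R0]_(j : 'I_n) F (i, j).
Proof. by rewrite pair_big; apply: eq_bigr => -[]. Qed.

Lemma pick_weight_ge0 G x p : 0 <= pick_weight G x p.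
Proof.
rewrite /pick_weight; case: ifP => _; first by case: ifP => _; lra.
case: ifP => _; last lra. apply: pow2_ge_0.
Qed.

Lemma pick_weight_sum G x : \big[Rplus/R0]_(p : 'I_n * 'I_n) pick_weight G x p = R1.
Proof.
rewrite /pick_weight; case: eqP => [Gx0|Gx0].
  rewrite (bigD1 (x, x)) //= !eqxx /= big1 ?Rplus_0_r // => -[a b] /=.
  by case: (a =P x) => [->|//]; case: (b =P x) => [->|//]; rewrite eqxx.
rewrite sum_pair.
rewrite (eq_bigr (fun i => if i \in G x then INR #|G x| * (/ INR (deg G x)) ^ 2 else R0)); last first.
  move=> i _; case: ifP => Hi /=.
    by rewrite -sum_ind; apply: eq_bigr => j _.
  by rewrite big1.
rewrite sum_ind /deg.
have : (0 < #|G x|)%N by rewrite card_gt0; apply/eqP.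
move=> /ltP/lt_INR; rewrite /= => Hpos.
field; lra.
Qed.

Lemma round_weightE G c : round_weight G c = \big[Rmult/R1]_(x : 'I_n) pick_weight G x (c x).
Proof. by rewrite /round_weight foldrE big_map big_enum. Qed.

Lemma round_weight_ge0 G c : 0 <= round_weight G c.
Proof.
rewrite round_weightE; apply: (big_ind (fun v => 0 <= v)); first lra.
  by move=> a b Ha Hb; apply: Rmult_le_pos.
by move=> i _; apply: pick_weight_ge0.
Qed.

Lemma round_weight_sum G : \big[Rplus/R0]_(c : picks n) round_weight G c = R1.
Proof.
rewrite (eq_bigr (fun c : picks n => \big[Rmult/R1]_(x : 'I_n) pick_weight G x (c x))); last by move=> c _; rewrite round_weightE.
rewrite -(bigA_distr_bigA (fun x p => pick_weight G x p)).
by rewrite big1 // => x _; rewrite pick_weight_sum.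
Qed.

Lemma size_seq_of_rounds T (cs : {ffun 'I_T -> picks n}) : size (seq_of_rounds cs) = T.
Proof. by rewrite /seq_of_rounds size_map size_enum_ord. Qed.

Lemma Prob_false G T E : (forall cs, size cs = T -> ~~ E (traj G cs)) -> Prob G T E = R0.
Proof.
move=> H; rewrite Prob_big big1 // => cs _.
by rewrite (negbTE (H _ (size_seq_of_rounds cs))).
Qed.

Lemma size_traj G cs : size (traj G cs) = (size cs).+1.
Proof. by elim: cs G => [|c cs IH] G //=; rewrite IH. Qed.

Lemma last_traj x G cs : last x (traj G cs) = last G (traj G cs).
Proof. by case: cs. Qed.

Lemma nth_traj x G cs t : (t <= size cs)%N -> nth x (traj G cs) t = nth G (traj G cs) t.
Proof. by move=> Ht; apply: set_nth_default; rewrite size_traj ltnS. Qed.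

Lemma step_sub G c y : G y \subset step G c y.
Proof. by rewrite /step ffunE subsetUl. Qed.

Lemma deg_step G c y : (deg G y <= deg (step G c) y)%N.
Proof. exact: subset_leq_card (step_sub G c y). Qed.

Lemma deg_last G cs y : (deg G y <= deg (last G (traj G cs)) y)%N.
Proof.
elim: cs G => [|c cs IH] G //=.
rewrite last_traj; apply: leq_trans (deg_step G c y) (IH _).
Qed.

Definition symg G := forall x y : 'I_n, (y \in G x) = (x \in G y).

Lemma sym_step G c : symg G -> symg (step G c).
Proof.
move=> HG x y; rewrite /step !ffunE !inE HG; congr (_ || _).
apply: eq_existsb => z; case: (c z) => a b /=; congr (_ && _).
by rewrite orbC; congr (_ || _); apply: andbC.
Qed.

Variables (u : 'I_n) (d0 : nat).

Definition Xs G := [set x in sphere G u 1 | (d0 <= 2 * deg_in G x (sphere G u 2))%N].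
Definition cond G := (d0 < 4 * #|Xs G|)%N.
Definition succ G c := (deg G u < deg (step G c) u)%N.
Definition good G x (p : 'I_n * 'I_n) := (p.1 == u) && (p.2 \in G x :&: sphere G u 2).

Lemma ball1E G : ball G u 1 = u |: G u.
Proof. by rewrite /= big_set1. Qed.

Lemma sphere2_notin G w : w \in sphere G u 2 -> (w \notin G u) && (w != u).
Proof.
rewrite /sphere inE ball1E => /andP [H _]; move: H; rewrite !inE negb_or eq_sym.
by case/andP => -> ->.
Qed.

Lemma good_succ G (c : picks n) x : good G x (c x) -> succ G c.
Proof.
rewrite /good; case E: (c x) => [a w] /= /andP [/eqP Ha]; rewrite inE => /andP [_ Hw].
move: (sphere2_notin Hw) => /andP [Hwu Hwne].
rewrite /succ /deg; apply: proper_card; apply/properP; split; first exact: step_sub.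
exists w => //; rewrite /step ffunE !inE; apply/orP; right.
apply/existsP; exists x; rewrite E /= Ha eqxx eq_sym Hwne /=.
by rewrite eqxx.
Qed.

Definition gx G x := \big[Rplus/R0]_(p : 'I_n * 'I_n) (if good G x p then pick_weight G x p else R0).

Lemma sum_le (T : finType) (F1 F2 : T -> R) : (forall i, F1 i <= F2 i) ->
  \big[Rplus/R0]_(i : T) F1 i <= \big[Rplus/R0]_(i : T) F2 i.
Proof. move=> H; apply: big_ind2 => //; [lra | move=> *; lra]. Qed.

Lemma gx_ge0 G x : 0 <= gx G x.
Proof.
apply: (big_ind (fun v => 0 <= v)); [lra | move=> *; lra |] => p _.
by case: ifP => _; [apply: pick_weight_ge0 | lra].
Qed.

Lemma gx_le1 G x : gx G x <= 1.
Proof.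
apply: (Rle_trans _ _ _ _ (Req_le _ _ (pick_weight_sum G x))); apply: sum_le => p.
case: ifP => _; [lra | apply: pick_weight_ge0].
Qed.

Lemma gx_lb G x : symg G -> (0 < d0)%N -> (4 * deg G u < 5 * d0)%N -> x \in Xs G ->
  / (6 * INR n) <= gx G x.
Proof.
move=> Hsym Hd0 Hdeg; rewrite /Xs inE => /andP [Hx1 Ha].
set S := G x :&: sphere G u 2.
have Hux : u \in G x.
  move: Hx1; rewrite /sphere inE ball1E !inE => /andP [Hxu /orP [Hxu'|//]].
  by rewrite Hxu' in Hxu.
  by rewrite Hsym.
have HGx : G x != set0 by apply/set0Pn; exists u.
have -> : gx G x = INR #|S| * (/ INR (deg G x)) ^ 2.
  rewrite /gx sum_pair (bigD1 (F := fun i => \big[Rplus/R0]_(j : 'I_n) (if good G x (i, j) then pick_weight G x (i, j) else R0)) u) //=.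
  rewrite [X in _ + X]big1 ?Rplus_0_r; last first.
    by move=> i /negbTE Hi; apply: big1 => j _; rewrite /good /= Hi.
  rewrite -sum_ind; apply: eq_bigr => j _; rewrite /good /= eqxx /=.
  case: ifP => // HjS; rewrite /pick_weight (negbTE HGx) /= Hux /=.
  by move: HjS; rewrite in_setI => /andP [-> _].
rewrite /deg_in -/S in Ha.
have Hn : (#|G x| <= n)%N by have := max_card (mem (G x)); rewrite card_ord.
have Hb1 : (#|ball G u 1| <= 1 + deg G u)%N.
  rewrite ball1E; apply: leq_trans (leq_card_setU _ _) _; by rewrite cards1.
have Hsub : G x \subset ball G u 1 :|: S.
  apply/subsetP => y Hy; rewrite in_setU.
  case Hb: (y \in ball G u 1) => //=; rewrite in_setI Hy /= /sphere in_setD Hb /=.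
  rewrite in_setU; apply/orP; right; apply/bigcupP; exists x;
    [by move: Hx1; rewrite /sphere in_setD => /andP [_ H]; exact: H | done].
have Hd : (#|G x| <= 6 * #|S|)%N.
  apply: leq_trans (subset_leq_card Hsub) _; apply: leq_trans (leq_card_setU _ _) _.
  move: Hb1 Ha Hdeg Hd0; rewrite /deg; lia.
have Hdpos : (0 < #|G x|)%N by rewrite card_gt0.
have Hprod : (#|G x| * #|G x| <= 6 * #|S| * n)%N by apply: leq_mul.
move: Hprod => /leP /le_INR; rewrite !mult_INR => Hprod.
move: Hdpos => /ltP /lt_INR => Hdpos; rewrite /= in Hdpos.
have Hn0 : 0 < INR n by apply: Rlt_le_trans Hdpos _; apply: le_INR; apply/leP.
rewrite /deg; set d := INR #|G x| in Hprod Hdpos *; set a := INR #|S| in Hprod *.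
rewrite (_ : INR 6 = 6) in Hprod; last by simpl; lra.
apply: (Rmult_le_reg_r (6 * INR n * (d * d))); first by apply: Rmult_lt_0_compat; nra.
have -> : / (6 * INR n) * (6 * INR n * (d * d)) = d * d by field; lra.
have -> : a * (/ d) ^ 2 * (6 * INR n * (d * d)) = 6 * a * INR n by field; lra.
lra.
Qed.

Lemma sum_sub (T : finType) (F1 F2 : T -> R) :
  \big[Rplus/R0]_(i : T) (F1 i - F2 i) = \big[Rplus/R0]_(i : T) F1 i - \big[Rplus/R0]_(i : T) F2 i.
Proof.
apply: (big_rec3 (fun a b c => a = b - c)); first lra.
by move=> i a b c _ ->; lra.
Qed.

Lemma prod_bound (T : finType) (f : T -> R) : (forall x, 0 <= f x <= 1) ->
  \big[Rmult/R1]_(x : T) (1 - f x) <= / (1 + \big[Rplus/R0]_(x : T) f x).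
Proof.
move=> Hf.
suff [_ [_ H]] : 0 <= \big[Rmult/R1]_(x : T) (1 - f x) /\ 0 <= \big[Rplus/R0]_(x : T) f x /\
  \big[Rmult/R1]_(x : T) (1 - f x) <= / (1 + \big[Rplus/R0]_(x : T) f x) by [].
apply: (big_rec2 (fun p s => 0 <= p /\ 0 <= s /\ p <= / (1 + s))) => [|i p s _ [Hp [Hs Hps]]].
  split; first lra. split; first lra. rewrite Rplus_0_r Rinv_1; lra.
have [H0 H1] := Hf i.
split; first nra. split; first lra.
have Hs1 : 0 < 1 + s by lra.
have Hps' : p * (1 + s) <= 1.
  by have := Rmult_le_compat_r (1 + s) _ _ (Rlt_le _ _ Hs1) Hps; rewrite Rinv_l; lra.
apply: (Rmult_le_reg_r (1 + (f i + s))); first lra.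
rewrite Rinv_l; last lra.
have -> : (1 - f i) * p * (1 + (f i + s)) = (1 - f i) * (p * (1 + s)) + p * (f i * (1 - f i)) by ring.
have Hp1 : p <= 1 by nra.
have A : (1 - f i) * (p * (1 + s)) <= (1 - f i) * 1 by apply: Rmult_le_compat_l; lra.
have B0 : 0 <= f i * (1 - f i) by nra.
have B : p * (f i * (1 - f i)) <= 1 * (f i * (1 - f i)) by apply: Rmult_le_compat_r; lra.
nra.
Qed.

Definition Wsucc G := \big[Rplus/R0]_(c : picks n) (if succ G c then round_weight G c else R0).

Lemma Wsucc_lb G : 1 - / (1 + \big[Rplus/R0]_(x : 'I_n) (if x \in Xs G then gx G x else R0)) <= Wsucc G.
Proof.
pose h x p := if (x \in Xs G) && good G x p then R0 else R1.
have step1 : forall c : picks n, round_weight G c - \big[Rmult/R1]_(x : 'I_n) (pick_weight G x (c x) * h x (c x))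
      <= (if succ G c then round_weight G c else R0).
  move=> c; case: ifP => Hs.
    suff : 0 <= \big[Rmult/R1]_(x : 'I_n) (pick_weight G x (c x) * h x (c x)) by lra.
    apply: (big_ind (fun v => 0 <= v)); [lra | move=> *; nra |] => x _.
    apply: Rmult_le_pos; first exact: pick_weight_ge0.
    rewrite /h; case: ifP => _; lra.
  rewrite round_weightE [X in _ - X](eq_bigr (fun x => pick_weight G x (c x))); first by apply: Req_le; apply: Rminus_diag_eq.
  move=> x _; rewrite /h; case: ifP => [/andP [_ Hg]|_]; last by rewrite Rmult_1_r.
  by rewrite (good_succ Hg) in Hs.
apply: Rle_trans (sum_le step1); rewrite sum_sub round_weight_sum.
rewrite -(bigA_distr_bigA (fun x p => pick_weight G x p * h x p)).
have Hfac : forall x, \big[Rplus/R0]_(p : 'I_n * 'I_n) (pick_weight G x p * h x p) = 1 - (if x \in Xs G then gx G x else R0).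
  move=> x.
  have E : forall p, pick_weight G x p * h x p = pick_weight G x p - (if x \in Xs G then (if good G x p then pick_weight G x p else R0) else R0).
    by move=> p; rewrite /h; case: (x \in Xs G); case: (good G x p) => /=; ring.
  rewrite (eq_bigr _ (fun p _ => E p)) sum_sub pick_weight_sum.
  case: (x \in Xs G); first by rewrite /gx.
  by rewrite big1 //; lra.
rewrite (eq_bigr _ (fun x _ => Hfac x)).
have := prod_bound (f := fun x => if x \in Xs G then gx G x else R0).
move=> H; have := H (fun x => ltac:(case: (x \in Xs G); [split; [apply: gx_ge0 | apply: gx_le1] | lra])).
move=> H'; apply: Rplus_le_compat; first by right.
by apply: Ropp_le_contravar; exact: H'.
Qed.

Lemma Wsucc_p G : symg G -> (0 < d0)%N -> (4 * deg G u < 5 * d0)%N -> cond G ->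
  INR d0 / (48 * INR n) <= Wsucc G.
Proof.
move=> Hsym Hd0 Hdeg Hc.
apply: Rle_trans (Wsucc_lb G).
set s := \big[Rplus/R0]_(x : 'I_n) _.
have Hn0 : 0 < INR n.
  apply: lt_0_INR; apply/ltP; case: (n) u => [[]//|n0 _]; done.
set k := #|Xs G|.
have Hs0 : INR k * / (6 * INR n) <= s.
  rewrite -sum_ind; apply: sum_le => x; case: ifP => Hx; last lra.
  exact: gx_lb.
have Hk : (k <= n)%N by have := max_card (mem (Xs G)); rewrite card_ord.
move/leP/le_INR: Hk => Hk.
have Hkd : INR d0 <= 4 * INR k.
  have : (d0 <= 4 * k)%N by apply: ltnW.
  by move/leP/le_INR; rewrite mult_INR /= => H; lra.
set s0 := INR k * / (6 * INR n) in Hs0.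
have Hs00 : 0 <= s0 by apply: Rmult_le_pos; [apply: pos_INR | apply: Rlt_le; apply: Rinv_0_lt_compat; lra].
have Hs01 : s0 <= 1.
  rewrite /s0; apply: (Rmult_le_reg_r (6 * INR n)); first lra.
  rewrite Rmult_assoc Rinv_l; lra.
have H1 : / (1 + s) <= / (1 + s0) by apply: Rinv_le_contravar; lra.
have H2 : s0 / 2 <= 1 - / (1 + s0).
  apply: (Rmult_le_reg_r (2 * (1 + s0))); first lra.
  have -> : (1 - / (1 + s0)) * (2 * (1 + s0)) = 2 * s0 by field; lra.
  have -> : s0 / 2 * (2 * (1 + s0)) = s0 * (1 + s0) by field.
  nra.
have H3 : INR d0 / (48 * INR n) <= s0 / 2.
  rewrite /s0; apply: (Rmult_le_reg_r (48 * INR n)); first lra.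
  have -> : INR d0 / (48 * INR n) * (48 * INR n) = INR d0 by field; lra.
  have -> : INR k * / (6 * INR n) / 2 * (48 * INR n) = 4 * INR k by field; lra.
  lra.
lra.
Qed.

Definition qq := 1 - INR d0 / (96 * INR n).

Lemma claim m : forall G j (E : seq (graph n) -> bool), symg G -> (0 < d0)%N -> (d0 <= n)%N ->
  (5 * d0 <= 4 * (deg G u + j))%N ->
  (forall cs, size cs = m -> E (traj G cs) ->
     (forall t, (t < m)%N -> cond (nth G (traj G cs) t)) /\
     (4 * deg (last G (traj G cs)) u < 5 * d0)%N) ->
  Prob G m E <= 2 ^ j * qq ^ m.
Proof.
have Hn0 : 0 < INR n.
  apply: lt_0_INR; apply/ltP; case: (n) u => [[]//|n0 _]; done.
have Hq0 : forall (Hdn : (d0 <= n)%N), 0 <= qq.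
  move=> Hdn; rewrite /qq; move/leP/le_INR: Hdn => Hdn.
  suff : INR d0 / (96 * INR n) <= 1 by lra.
  apply: (Rmult_le_reg_r (96 * INR n)); first lra.
  have -> : INR d0 / (96 * INR n) * (96 * INR n) = INR d0 by field; lra.
  lra.
have H2j : forall j, 1 <= 2 ^ j by move=> j; apply: pow_R1_Rle; lra.
elim: m => [|m IH] G j E Hsym Hd0 Hdn Hj HE.
  rewrite Prob_0 /=; have := H2j j; case: (E _); lra.
case Hc: (cond G && (4 * deg G u < 5 * d0)%N); last first.
  rewrite Prob_false; first by have := H2j j; have := pow_le _ m.+1 (Hq0 Hdn); nra.
  move=> cs Hcs; apply/negP => HEc; have [Ht Hl] := HE cs Hcs HEc.
  have := Ht 0%N erefl; case: cs Hcs HEc Hl {Ht} => [//|c cs] _ _ /= Hl Hc0.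
  have := deg_last (step G c) cs u; rewrite last_traj in Hl.
  move: Hc; rewrite Hc0 /= => /negbT; rewrite -leqNgt => Hge Hle.
  move: (deg_step G c u) => Hs; move: Hl Hge Hle Hs; lia.
move/andP: Hc => [Hc Hdeg].
have Hj1 : (0 < j)%N by move: Hj Hdeg; lia.
rewrite Prob_S.
set A := 2 ^ j * qq ^ m.
have Hb : forall c : picks n, round_weight G c * Prob (step G c) m (fun gs => E (G :: gs)) <=
    A * round_weight G c - (A * / 2) * (if succ G c then round_weight G c else R0).
  move=> c.
  have HE' : forall cs, size cs = m -> E (G :: traj (step G c) cs) ->
     (forall t, (t < m)%N -> cond (nth (step G c) (traj (step G c) cs) t)) /\
     (4 * deg (last (step G c) (traj (step G c) cs)) u < 5 * d0)%N.
    move=> cs Hcs HEc; have Hcs2 : size (c :: cs) = m.+1 by rewrite /= Hcs.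
    have [Ht Hl] := HE (c :: cs) Hcs2 HEc.
    split; last by move: Hl; rewrite /= last_traj.
    move=> t Htm; rewrite -(nth_traj G); last by rewrite Hcs ltnW.
    by have := Ht t.+1; rewrite ltnS => /(_ Htm).
  have Hrw := round_weight_ge0 G c.
  case Hs: (succ G c).
    have := IH (step G c) j.-1 (fun gs => E (G :: gs)) (sym_step c Hsym) Hd0 Hdn _ HE'.
    move: Hs; rewrite /succ => Hs.
    have Hj' : (5 * d0 <= 4 * (deg (step G c) u + j.-1))%N by move: Hj Hs Hj1; lia.
    move=> /(_ Hj') Hp.
    have -> : A * round_weight G c - A * / 2 * round_weight G c = round_weight G c * (2 ^ j.-1 * qq ^ m).
      rewrite /A; case: (j) Hj1 => [//|j'] _ /=; field.
    by apply: Rmult_le_compat_l.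
  have Hj' : (5 * d0 <= 4 * (deg (step G c) u + j))%N by move: Hj (deg_step G c u); lia.
  have Hp := IH (step G c) j (fun gs => E (G :: gs)) (sym_step c Hsym) Hd0 Hdn Hj' HE'.
  have -> : A * round_weight G c - A * / 2 * R0 = round_weight G c * A by rewrite /A; ring.
  by apply: Rmult_le_compat_l.
apply: Rle_trans (sum_le Hb) _.
rewrite sum_sub -!big_distrr /= round_weight_sum.
have HW := Wsucc_p Hsym Hd0 Hdeg Hc; rewrite -/(Wsucc G).
have HA : 0 <= A by rewrite /A; apply: Rmult_le_pos; [have := H2j j; lra | apply: pow_le; auto].
rewrite /= -/A (Rmult_comm (qq) (qq ^ m)) -Rmult_assoc -/A /qq.
have : A * (INR d0 / (48 * INR n)) <= A * Wsucc G by apply: Rmult_le_compat_l.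
have -> : INR d0 / (96 * INR n) = INR d0 / (48 * INR n) / 2 by field; lra.
nra.
Qed.
End S.

Lemma exp_pow a k : exp a ^ k = exp (INR k * a).
Proof.
elim: k => [|k IH]; first by rewrite /= Rmult_0_l exp_0.
by rewrite S_INR /= IH -exp_plus; f_equal; ring.
Qed.

Lemma exp_mono a b : a <= b -> exp a <= exp b.
Proof. case=> [H|->]; [by left; apply: exp_increasing | lra]. Qed.

Lemma numeric (n d0 T : nat) : (2 <= n)%N -> (1 <= d0 <= n)%N ->
  384 * INR n * ln (INR n) <= INR T ->
  2 ^ (2 * d0) * (1 - INR d0 / (96 * INR n)) ^ T <= / INR n ^ 2.
Proof.
move=> Hn Hd HT.
have Hn2 : 2 <= INR n by have := le_INR 2 n (leP Hn); simpl; lra.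
move/andP: Hd => [Hd1' Hdn'].
have Hd1 : 1 <= INR d0 by have := le_INR 1 d0 (leP Hd1'); simpl; lra.
have Hdn : INR d0 <= INR n by apply: le_INR; apply/leP.
have Hln2 : ln 2 <= ln (INR n).
  case: (Rle_lt_or_eq_dec _ _ Hn2) => [H|<-]; [left; apply: ln_increasing; lra | lra].
have Hln0 : 0 < ln 2 by rewrite -ln_1; apply: ln_increasing; lra.
set x := INR d0 / (96 * INR n).
have Hx : 0 <= x <= 1 / 96.
  rewrite /x; split; first by apply: Rmult_le_pos; [lra | apply: Rlt_le; apply: Rinv_0_lt_compat; lra].
  apply: (Rmult_le_reg_r (96 * INR n)); first lra.
  have -> : INR d0 / (96 * INR n) * (96 * INR n) = INR d0 by field; lra.
  lra.
have H1 : (1 - x) ^ T <= exp (INR T * (- x)).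
  rewrite -exp_pow; apply: pow_incr; split; first lra.
  have := exp_ineq1_le (- x); lra.
have H2 : 2 ^ (2 * d0) = exp (INR (2 * d0) * ln 2).
  by rewrite -exp_pow exp_ln //; lra.
have H3 : / INR n ^ 2 = exp (- (2 * ln (INR n))).
  rewrite exp_Ropp (_ : 2 * ln (INR n) = INR 2 * ln (INR n)); last by simpl; ring.
  by rewrite -exp_pow exp_ln //; lra.
rewrite H2 H3; apply: Rle_trans (Rmult_le_compat_l _ _ _ (Rlt_le _ _ (exp_pos _)) H1) _.
rewrite -exp_plus; apply: exp_mono.
have HxT : 4 * INR d0 * ln (INR n) <= INR T * x.
  rewrite /x; apply: Rle_trans (_ : INR d0 / (96 * INR n) * (384 * INR n * ln (INR n)) <= _).
    right; field; lra.
  rewrite (Rmult_comm (INR T)); apply: Rmult_le_compat_l => //; exact: (proj1 Hx).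
rewrite mult_INR (_ : INR 2 = 2); last by simpl; lra.
nra.
Qed.

Lemma Tlen_ge C n : 0 <= C * INR n * ln (INR n) -> C * INR n * ln (INR n) <= INR (Tlen C n).
Proof.
rewrite /Tlen /Rceil; set x := C * INR n * ln (INR n) => Hx.
have [H1 H2] := archimed (- x).
have Hz : x <= IZR (1 - up (- x)) by rewrite minus_IZR; lra.
have Hz0 : (0 <= 1 - up (- x))%Z by apply: le_IZR; lra.
by rewrite INR_IZR_INZ Z2Nat.id.
Qed.

Lemma mindeg_le n (G : graph n) : (mindeg G <= n)%N.
Proof.
rewrite /mindeg; apply: (big_ind (fun v => v <= n)%N) => //.
  by move=> a b Ha _; apply: leq_trans (geq_minl a b) Ha.
by move=> x _; rewrite /deg; have := max_card (mem (G x)); rewrite card_ord.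
Qed.

Close Scope R_scope.

Theorem lemma5 :
  exists C : R, Rlt R0 C /\
    forall (n : nat) (G0 : graph n) (u : 'I_n),
      2 <= n -> simple_graph G0 -> connected_graph G0 ->
      Rle (Prob G0 (Tlen C n) (event5 G0 u (Tlen C n))) (Rinv (pow (INR n) 2)).
Proof.
Open Scope R_scope.
exists 384; split; first lra.
move=> n G0 u Hn [Hsym _] _.
have Hn2 : (2 <= INR n) by have := le_INR 2 n (leP Hn); simpl; lra.
have Hpos : (0 < / INR n ^ 2) by apply: Rinv_0_lt_compat; apply: pow_lt; lra.
have Hln : (0 <= ln (INR n)).
  by rewrite -ln_1; left; apply: ln_increasing; lra.
have HT := Tlen_ge (C := 384) (n := n) ltac:(apply: Rmult_le_pos; [lra | exact Hln]).
set T := Tlen 384 n in HT *.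
case Hd: (mindeg G0) => [|d0'].
  rewrite Prob_false; first lra.
  move=> cs _; apply/negP => /andP [_]; rewrite Hd muln0 ltn0 //.
have Hd0 : (0 < mindeg G0)%N by rewrite Hd.
have Hdn := mindeg_le G0.
have Hclaim := @claim n u (mindeg G0) T G0 (2 * mindeg G0) (event5 G0 u T) Hsym Hd0 Hdn.
have := Hclaim ltac:(lia).
have Hnum := @numeric n (mindeg G0) T Hn ltac:(by rewrite Hd0 Hdn) HT.
rewrite /qq in Hnum *.
move=> H; apply: Rle_trans (H _) Hnum.
move=> cs Hcs /andP [/forallP Hf Hl]; split.
  by move=> t Ht; exact: (Hf (Ordinal Ht)).
by move: Hl; rewrite -(nth_last G0) size_traj Hcs.
Qed.
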